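(* Let $\mathcal{A} = (V, V_0, V_1, E, v_I)$ be an arena and $w \colon E \to \mathbb{Z}$ a weight function. Player~$0$ wins $(\mathcal{A}, \mathsf{AvgEnergy_L}(w, t))$ for some $t \in \mathbb{N}$ if, and only if, Player~$0$ wins $(\mathcal{A}, \mathsf{Energy_{LU}}(w, cap))$ for some $cap \in \mathbb{N}$.
   Context: An arena $\mathcal{A} = (V, V_0, V_1, E, v_I)$ consists of a finite directed graph $(V,E)$ in which every vertex has at least one outgoing edge, a partition $V = V_0 \uplus V_1$ (vertices of Player~$0$ and Player~$1$), and an initial vertex $v_I$. A play is an infinite path $v_0 v_1 v_2 \cdots$ with $v_0 = v_I$. A strategy for Player~$i$ is a map $\sigma \colon V^* V_i \to V$ with $(v, \sigma(xv)) \in E$ for all $xv \in V^*V_i$; a play is consistent with $\sigma$ if $v_{n+1} = \sigma(v_0\cdots v_n)$ whenever $v_n \in V_i$. Given an objective $\mathrm{Win} \subseteq V^\omega$, Player~$0$ wins $(\mathcal{A}, \mathrm{Win})$ if she has a strategy all of whose consistent plays lie in $\mathrm{Win}$. The energy level of a finite path is $\mathrm{EL}(v_0 \cdots v_n) = \sum_{i=0}^{n-1} w(v_i, v_{i+1})$. Objectives: $\mathsf{Energy_L}(w) = \{ v_0 v_1 \cdots \mid \forall n.\ 0 \le \mathrm{EL}(v_0\cdots v_n)\}$; $\mathsf{Energy_{LU}}(w,cap) = \{ v_0 v_1 \cdots \mid \forall n.\ 0 \le \mathrm{EL}(v_0\cdots v_n) \le cap\}$; $\mathsf{AE}(w,t)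 = \{ v_0 v_1 \cdots \mid \limsup_{n\to\infty} \frac{1}{n}\sum_{i=0}^{n-1} \mathrm{EL}(v_0\cdots v_i) \le t\}$; $\mathsf{AvgEnergy_L}(w,t) = \mathsf{Energy_L}(w) \cap \mathsf{AE}(w,t)$. *)

(* Defs.v *)
From mathcomp Require Import all_boot all_order all_algebra.
Set Implicit Arguments. Unset Strict Implicit. Unset Printing Implicit Defensive.
Import Order.TTheory GRing.Theory Num.Theory.
Local Open Scope ring_scope.

(* An arena (V, V0, V1, E, vI): V finite, V0 = vertices of Player 0 (V1 is its
   complement), E the edge relation, every vertex has a successor. *)
Record arena := Arena {
  vert : finType;
  V0 : {pred vert};
  edge : rel vert;
  vinit : vert;
  edge_total : forall v, exists u, edge v u
}.

Arguments V0 : clear implicits.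
Arguments edge : clear implicits.
Arguments vinit : clear implicits.
Section Games.
Variable A : arena.
Let V := vert A.

(* Player i is represented by a boolean: i = false is Player 0. *)
Definition owned_by (i : bool) (v : V) : bool :=
  if i then v \notin V0 A else v \in V0 A.

(* A strategy for Player i: a map from histories x v (x : V^*, v \in V_i) to
   a successor of v.  We write it curried as sigma x v. *)
Definition strategy (i : bool) (sigma : seq V -> V -> V) : Prop :=
  forall (x : seq V) (v : V), owned_by i v -> edge A v (sigma x v).

Definition is_play (p : nat -> V) : Prop :=
  p 0%N = vinit A /\ forall n, edge A (p n) (p n.+1).

Definition prefix (p : nat -> V) (n : nat) : seq V := [seq p k | k <- iota 0 n].

Definition consistent (i : bool) (sigma : seq V -> V -> V) (p : nat -> V) : Prop :=
  forall n, owned_by i (p n) -> p n.+1 = sigma (prefix p n) (p n).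

Definition wins0 (Win : (nat -> V) -> Prop) : Prop :=
  exists sigma, strategy false sigma /\
    forall p, is_play p -> consistent false sigma p -> Win p.

Definition EL (w : V -> V -> int) (p : nat -> V) (n : nat) : int :=
  \sum_(i < n) w (p i) (p i.+1).

Definition EnergyL (w : V -> V -> int) (p : nat -> V) : Prop :=
  forall n, 0 <= EL w p n.

Definition EnergyLU (w : V -> V -> int) (cap : nat) (p : nat -> V) : Prop :=
  forall n, 0 <= EL w p n <= cap%:Z.

Definition avgEL (w : V -> V -> int) (p : nat -> V) (n : nat) : rat :=
  ((\sum_(i < n) EL w p i)%:~R) / (n%:R).

(* limsup_{n -> oo} a_n <= t, unfolded: for every eps > 0, eventually
   a_n <= t + eps. *)
Definition limsup_le (a : nat -> rat) (t : rat) : Prop :=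
  forall eps : rat, 0 < eps -> exists N : nat, forall n, (N <= n)%N -> a n <= t + eps.

Definition AE (w : V -> V -> int) (t : nat) (p : nat -> V) : Prop :=
  limsup_le (avgEL w p) t%:R.

Definition AvgEnergyL (w : V -> V -> int) (t : nat) (p : nat -> V) : Prop :=
  EnergyL w p /\ AE w t p.

End Games.

(* Main.v *)
Require Import Defs.
From mathcomp Require Import all_boot all_order all_algebra.
From mathcomp Require Import zify.
From Stdlib Require Import Lia ClassicalEpsilon ClassicalDescription Classical.
Set Implicit Arguments. Unset Strict Implicit. Unset Printing Implicit Defensive.
Import Order.TTheory GRing.Theory Num.Theory.

Section Proof.
Variable A : arena.
Variable w : vert A -> vert A -> int.
Local Notation V := (vert A).
Local Open Scope ring_scope.

Definition pb (P : Prop) : bool := if excluded_middle_informative P then true else false.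
Lemma pbP (P : Prop) : reflect P (pb P).
Proof. rewrite /pb; case: excluded_middle_informative => h; by constructor. Qed.

Definition ELs (h : seq V) : int :=
  \sum_(i < (size h).-1) w (nth (vinit A) h i) (nth (vinit A) h i.+1).

Lemma size_prefix (p : nat -> V) n : size (Defs.prefix p n) = n.
Proof. by rewrite /Defs.prefix size_map size_iota. Qed.

Lemma prefixS (p : nat -> V) n : Defs.prefix p n.+1 = rcons (Defs.prefix p n) (p n).
Proof. by rewrite /Defs.prefix -addn1 iotaD map_cat /= cats1. Qed.

Lemma nth_prefix (p : nat -> V) n i : (i < n)%N -> nth (vinit A) (Defs.prefix p n) i = p i.
Proof.
move=> hi; rewrite /Defs.prefix (nth_map 0%N) ?size_iota // nth_iota //.
Qed.

Lemma ELs_prefix (p : nat -> V) n : ELs (Defs.prefix p n.+1) = EL w p n.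
Proof.
rewrite /ELs size_prefix /EL; apply: eq_bigr => i _.
rewrite !nth_prefix // ltnS //; exact: ltnW.
Qed.

Lemma EL0 (p : nat -> V) : EL w p 0 = 0.
Proof. by rewrite /EL big_ord0. Qed.

Lemma ELS (p : nat -> V) n : EL w p n.+1 = EL w p n + w (p n) (p n.+1).
Proof. by rewrite /EL big_ord_recr. Qed.


Lemma LU_avg (cap : nat) p : EnergyLU w cap p -> AvgEnergyL w cap p.
Proof.
move=> H; split; first by move=> n; case/andP: (H n).
move=> eps eps0; exists 0%N => n _.
rewrite /avgEL.
case: n => [|n].
  by rewrite invr0 mulr0 addr_ge0 // ltW.
have hn : (0 : rat) < n.+1%:R by rewrite ltr0n.
rewrite ler_pdivrMr //.
apply: (le_trans (y := (cap%:R * n.+1%:R : rat))); last first.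
  by rewrite ler_pM2r // lerDl ltW.
have : \sum_(i < n.+1) EL w p i <= \sum_(i < n.+1) cap%:Z.
  by apply: ler_sum => i _; case/andP: (H i).
rewrite sumr_const card_ord -(ler_int rat) => h; apply: (le_trans h).
by rewrite rmorphMn /= mulr_natr.
Qed.

Definition inr (C : nat) (e : int) := (0 <= e) && (e <= C%:Z).

Definition F (C : nat) (X : V -> int -> Prop) (v : V) (e : int) : Prop :=
  inr C e /\ (if v \in V0 A then exists u, edge A v u /\ X u (e + w v u)
              else forall u, edge A v u -> X u (e + w v u)).

Definition Safe (C : nat) (v : V) (e : int) : Prop :=
  exists X : V -> int -> Prop, (forall v e, X v e -> F C X v e) /\ X v e.

Lemma F_mono C (X Y : V -> int -> Prop) v e :
  (forall v e, X v e -> Y v e) -> F C X v e -> F C Y v e.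
Proof.
move=> XY [h1 h2]; split => //; case: (v \in V0 A) h2.
  by case=> u [hu hX]; exists u; split => //; apply: XY.
by move=> h u hu; apply: XY; apply: h.
Qed.

Lemma safe_post C v e : Safe C v e -> F C (Safe C) v e.
Proof.
case=> X [hX Xv]; apply: (F_mono (X := X)); last exact: hX.
by move=> u f Xu; exists X.
Qed.

Lemma safe_mono C C' v e : (C <= C')%N -> Safe C v e -> Safe C' v e.
Proof.
move=> hC [X [hX Xv]]; exists X; split => // u f /hX [h1 h2]; split => //.
case/andP: h1 => h0 h1; rewrite /inr h0 /=; apply: (le_trans h1).
by rewrite lez_nat.
Qed.

Definition pickE (v : V) (Q : V -> Prop) : V :=
  epsilon (inhabits v) (fun u => edge A v u /\ ((exists u', edge A v u' /\ Q u') -> Q u)).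

Lemma pickE_spec v Q : edge A v (pickE v Q) /\ ((exists u', edge A v u' /\ Q u') -> Q (pickE v Q)).
Proof.
apply: (epsilon_spec (inhabits v) (fun u => edge A v u /\ ((exists u', edge A v u' /\ Q u') -> Q u))).
case: (classic (exists u', edge A v u' /\ Q u')).
  by case=> u [h1 h2]; exists u; split.
move=> hn; case: (edge_total v) => u hu; exists u; split => // h; by case: hn.
Qed.

Definition sig0 (C : nat) (x : seq V) (v : V) : V :=
  pickE v (fun u => Safe C u (ELs (rcons x v) + w v u)).

Lemma safe_win C : Safe C (vinit A) 0 -> wins0 (EnergyLU w C).
Proof.
move=> h0; exists (sig0 C); split.
  by move=> x v _; case: (pickE_spec v (fun u => Safe C u (ELs (rcons x v) + w v u))).
move=> p [p0 pE] pc.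
have inv : forall n, Safe C (p n) (EL w p n).
  elim=> [|n IH]; first by rewrite EL0 p0.
  have [_ hF] := safe_post IH.
  rewrite ELS.
  move: (pc n) hF; rewrite /owned_by; case: (p n \in V0 A) => hc hF.
    rewrite hc // /sig0 -prefixS ELs_prefix.
    have [_ hs] := pickE_spec (p n) (fun u => Safe C u (EL w p n + w (p n) u)).
    by apply: hs; case: hF => u [hu hs']; exists u.
  by apply: hF.
by move=> n; case: (safe_post (inv n)) => h _; exact: h.
Qed.


Definition U (v : V) (e : int) := forall C, ~ Safe C v e.
Definition Goal (L : int) (v : V) (e : int) := e < 0 \/ (L <= e /\ U v e).

Fixpoint Attr (L : int) (k : nat) (v : V) (e : int) : Prop :=
  match k with
  | 0%N => Goal L v e
  | k'.+1 => Goal L v e \/ ((0 <= e) && (e < L) /\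
      (if v \in V0 A then forall u, edge A v u -> Attr L k' u (e + w v u)
       else exists u, edge A v u /\ Attr L k' u (e + w v u)))
  end.

Lemma goal_attr L k v e : Goal L v e -> Attr L k v e.
Proof. by case: k => [|k] //= h; left. Qed.

Lemma attr_mono L k v e : Attr L k v e -> Attr L k.+1 v e.
Proof.
elim: k v e => [|k IH] v e /=; first by left.
case=> [h|[hr hc]]; first by left.
right; split => //; case: (v \in V0 A) hc.
  by move=> h u hu; apply: IH; apply: h.
by case=> u [hu h]; exists u; split => //; apply: IH.
Qed.

Lemma stab_step L k : (forall v e, Attr L k.+1 v e -> Attr L k v e) ->
  forall v e, Attr L k.+2 v e -> Attr L k.+1 v e.
Proof.
move=> IH v e /= [h|[hr hc]]; first by left.
right; split => //; case: (v \in V0 A) hc.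
  by move=> h u hu; apply: IH; apply: h.
by case=> u [hu h]; exists u; split => //; apply: IH.
Qed.

Lemma stab_from L k : (forall v e, Attr L k.+1 v e -> Attr L k v e) ->
  forall j, (k <= j)%N -> forall v e, Attr L j.+1 v e -> Attr L j v e.
Proof.
move=> h j; elim: j => [|j IH]; first by rewrite leqn0 => /eqP <-.
rewrite leq_eqVlt => /orP [/eqP <- //|hk].
by apply: stab_step; apply: IH.
Qed.

Definition NL (L : int) : nat := (#|V| * `|L|)%N.

Lemma attr_count L : exists k, (k <= NL L)%N /\ forall v e, Attr L k.+1 v e -> Attr L k v e.
Proof.
case: (classic (exists k, (k <= NL L)%N /\ forall v e, Attr L k.+1 v e -> Attr L k v e)) => // hn.
have H : forall k, (k <= NL L)%N -> exists v e, Attr L k.+1 v e /\ ~ Attr L k v e.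
  move=> k hk; apply: NNPP => hne; apply: hn; exists k; split => // v e ha.
  by apply: NNPP => hna; apply: hne; exists v, e.
pose m := `|L|%N.
pose B k := [set s : V * 'I_m | pb (Attr L k s.1 (nat_of_ord s.2)%:Z)].
have HB : forall k, (k <= (NL L).+1)%N -> (k <= #|B k|)%N.
  elim=> [|k IH] hk //.
  have hk' : (k <= NL L)%N by [].
  have {IH} IH := IH (ltnW hk).
  case: (H k hk') => v [e [ha hna]].
  have hng : ~ Goal L v e by move=> hg; apply: hna; apply: goal_attr.
  have hr : (0 <= e) && (e < L) by move: ha => /= [//|[]].
  case: e ha hna hr {hng} => [n|n] ha hna /andP [he0 heL]; last by [].
  have hL : (0 <= L) by apply: le_trans (ltW heL).
  have hnm : (n < m)%N by rewrite -ltz_nat /m gez0_abs.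
  have hp : B k \proper B k.+1.
    apply/properP; split.
      by apply/subsetP => s; rewrite !inE => /pbP h; apply/pbP; apply: attr_mono.
    by exists (v, Ordinal hnm); rewrite !inE /=; apply/pbP.
  by apply: leq_trans (proper_card hp).
have := HB (NL L).+1 (leqnn _).
have : (#|B (NL L).+1| <= NL L)%N.
  by apply: leq_trans (max_card _) _; rewrite card_prod card_ord.
by move=> h1 h2; have := leq_trans h2 h1; rewrite ltnn.
Qed.


Lemma attr_stable L v e : Attr L (NL L).+1 v e -> Attr L (NL L) v e.
Proof.
case: (attr_count L) => k [hk h]; exact: (stab_from h hk).
Qed.

Lemma uniformC (I : finType) (P : I -> nat -> Prop) :
  (forall i C C', (C <= C')%N -> P i C -> P i C') ->
  (forall i, exists C, P i C) -> exists C, forall i, P i C.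
Proof.
move=> hm H.
pose f i := proj1_sig (constructive_indefinite_description _ (H i)).
exists (\max_i f i) => i; apply: (hm i (f i)); first exact: leq_bigmax.
exact: (proj2_sig (constructive_indefinite_description _ (H i))).
Qed.

Definition Wb : nat := \max_(q : V * V) `|w q.1 q.2|%N.

Lemma w_le u x : w u x <= Wb%:Z /\ - (Wb%:Z) <= w u x.
Proof.
have h : (`|w u x| <= Wb)%N by apply: (leq_bigmax (F := fun q : V * V => `|w q.1 q.2|%N) (u, x)).
have h1 := lez_abs (w u x); have h2 := lez_abs (- w u x); rewrite abszN in h2.
lia.
Qed.

Lemma attrU L v e : U v e -> Attr L (NL L) v e.
Proof.
move=> hU; apply: NNPP => hna.
pose Y (u : V) (e' : int) := (0 <= e') && (e' < L) /\ ~ Attr L (NL L) u e'.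
pose P (q : V * 'I_(Wb.+1)) C := U q.1 (L + (nat_of_ord q.2)%:Z) \/ Safe C q.1 (L + (nat_of_ord q.2)%:Z).
have [Cu hCu] : exists C, forall q, P q C.
  apply: uniformC.
    by move=> q C C' hC [h|h]; [left|right; apply: safe_mono h].
  move=> q; case: (classic (U q.1 (L + (nat_of_ord q.2)%:Z))) => h.
    by exists 0%N; left.
  apply: NNPP => hn; apply: h => C hC; apply: hn; exists C; by right.
pose Cs := maxn Cu `|L|.
pose X (u : V) (e' : int) := Y u e' \/ Safe Cs u e'.
have key : forall u (e' : int) x, (0 <= e') && (e' < L) ->
    ~ Attr L (NL L) x (e' + w u x) -> X x (e' + w u x).
  move=> u e' x /andP [h0 hL] hx.
  have hg : ~ Goal L x (e' + w u x) by move=> hg; apply: hx; apply: goal_attr.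
  have h1 : 0 <= e' + w u x by rewrite leNgt; apply/negP => h; apply: hg; left.
  case: (ltP (e' + w u x) L) => h2.
    by left; split => //; rewrite h1 h2.
  have hnU : ~ U x (e' + w u x) by move=> hu; apply: hg; right.
  have [hw1 hw2] := w_le u x.
  have hj : (`|(e' + w u x - L)%R| < Wb.+1)%N.
    have hpos : 0 <= e' + w u x - L by lia.
    have := gez0_abs hpos; lia.
  case: (hCu (x, Ordinal hj)) => /=; rewrite gez0_abs ?subr_ge0 // addrC subrK.
    by move=> hu; case: hnU.
  by move=> hs; right; apply: safe_mono hs; apply: leq_maxl.
have hX : forall u e', X u e' -> F Cs X u e'.
  move=> u e' [[hr hn]|hs]; last first.
    by apply: (F_mono (X := Safe Cs)) => //; [move=> ? ? ?; right|apply: safe_post].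
  have hn2 : ~ Attr L (NL L).+1 u e' by move/attr_stable.
  split.
    case/andP: hr => h0 hL; rewrite /inr h0 /=.
    have := lez_abs L; have : (`|L| <= Cs)%N by apply: leq_maxr.
    lia.
  case hv: (u \in V0 A).
    apply: NNPP => hne; apply: hn2; right; split => //; rewrite hv => x hx.
    apply: NNPP => hnx; apply: hne; exists x; split => //; exact: key.
  move=> x hx; apply: key => // hax; apply: hn2; right; split => //; rewrite hv.
  by exists x.
have hY : Y v e.
  split => //.
  have hg : ~ Goal L v e by move=> hg; apply: hna; apply: goal_attr.
  have h1 : 0 <= e by rewrite leNgt; apply/negP => h; apply: hg; left.
  rewrite h1 /= ltNge; apply/negP => h; apply: hg; right; by split.
by apply: (hU Cs); exists X; split => //; left.
Qed.


Lemma avg_big (f : nat -> int) (T' Q W : nat) :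
  f 0%N = 0 -> (forall i, 0 <= f i) -> (forall i, f i.+1 - W%:Z <= f i) -> (0 < W)%N ->
  (2 * W * Q)%N%:Z <= f T' -> (Q * Q.+1)%N%:Z <= \sum_(i < T'.+1) f i.
Proof.
move=> f0 fge fst W0 fT.
have back : forall j, (j <= T')%N -> f T' - (j * W)%N%:Z <= f (T' - j)%N.
  elim=> [|j IH] hj; first by rewrite subn0 mul0n subr0.
  have hj' : (j <= T')%N by apply: ltnW.
  have := IH hj'; rewrite -(subnSK hj) => h.
  have := fst (T' - j.+1)%N; rewrite mulSn; lia.
have hT : (2 * Q <= T')%N.
  have := back T' (leqnn _); rewrite subnn f0 => h.
  have h2 : (W * (2 * Q) <= W * T')%N by nia.
  by rewrite leq_pmul2l in h2.
pose S n := \sum_(i < n) f i.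
have Sge : forall n, 0 <= S n by move=> n; apply: sumr_ge0 => i _.
have sums : forall j, (j <= Q)%N -> S (T' - j)%N + (j.+1 * Q)%N%:Z <= S T'.+1.
  elim=> [|j IH] hj.
    rewrite subn0 /S big_ord_recr /= mul1n lerD2l.
    apply: le_trans fT; rewrite lez_nat; nia.
  have hjT : (j < T')%N by apply: leq_trans hT; lia.
  have := IH (ltnW hj); rewrite /S -(subnSK hjT) big_ord_recr /= => h.
  have hb := back j.+1 hjT.
  have e1 : (j.+1 * W <= Q * W)%N by rewrite leq_mul2r hj orbT.
  have e2 : (Q <= W * Q)%N by rewrite leq_pmull.
  have e3 : (2 * W * Q = W * Q + Q * W)%N by rewrite -mulnA mul2n -addnn mulnC.
  move: h hb fT; rewrite /S (mulSn j.+1 Q) e3.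
  move: (\sum_(i < T' - j.+1) f i) (\sum_(i < T'.+1) f i) (f (T' - j.+1)%N) (f T').
  move: e1 e2; move: (j.+1 * W)%N (Q * W)%N (W * Q)%N (j.+1 * Q)%N => a b c d.
  lia.
have := sums Q (leqnn _); have := Sge (T' - Q)%N; rewrite /S mulnC; lia.
Qed.

Section Play.
Variable sg : seq V -> V -> V.
Variable t : nat.
Hypothesis Hstrat : strategy false sg.
Hypothesis Hwin : forall p, is_play p -> consistent false sg p -> AvgEnergyL w t p.
Hypothesis HU0 : U (vinit A) 0.

Definition Wb1 : nat := Wb.+1.
Definition Qf (T : nat) (e : int) : nat := (t.+1 * (1 + 2 * #|V| * Wb1) + T + `|e| + 2)%N.
Definition newL (T : nat) (e : int) : int := (2 * Wb1 * Qf T e)%N%:Z.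

Definition mv (h : seq V) (L : int) (k : nat) : V :=
  let v := last (vinit A) h in
  if v \in V0 A then sg (take (size h).-1 h) v
  else pickE v (fun u => Attr L k u (ELs h + w v u)).

Definition step (c : seq V * int * nat) : seq V * int * nat :=
  let: (h, L, k) := c in
  let v := last (vinit A) h in
  let e := ELs h in
  let L1 := if pb (Goal L v e) then newL (size h).-1 e else L in
  let k1 := if pb (Goal L v e) then NL L1 else k in
  (rcons h (mv h L1 k1.-1), L1, k1.-1).

Definition cfg (n : nat) := iter n step ([:: vinit A], 0, 0%N).
Definition hist n := (cfg n).1.1.
Definition Lc n := (cfg n).1.2.
Definition kc n := (cfg n).2.
Definition pp n := last (vinit A) (hist n).

Lemma histS n : hist n.+1 = rcons (hist n) (pp n.+1).
Proof.
rewrite /pp /hist /cfg iterS; case: (iter n step _) => [[h L] k] /=.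
by rewrite last_rcons.
Qed.

Lemma hist_pref n : hist n = Defs.prefix pp n.+1.
Proof.
elim: n => [|n IH]; first by [].
by rewrite histS IH -prefixS.
Qed.

Lemma size_hist n : size (hist n) = n.+1.
Proof. by rewrite hist_pref size_prefix. Qed.

Lemma ELh n : ELs (hist n) = EL w pp n.
Proof. by rewrite hist_pref ELs_prefix. Qed.

Lemma last_hist n : last (vinit A) (hist n) = pp n.
Proof. by []. Qed.

Lemma step_facts n :
  let e := EL w pp n in
  let L1 := if pb (Goal (Lc n) (pp n) e) then newL n e else Lc n in
  let k1 := if pb (Goal (Lc n) (pp n) e) then NL L1 else kc n in
  [/\ Lc n.+1 = L1, kc n.+1 = k1.-1 & pp n.+1 = mv (hist n) L1 k1.-1].
Proof.
rewrite /pp /Lc /kc /hist /cfg iterS -/(cfg n).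
have hs := size_hist n; have he := ELh n; rewrite /hist in hs he.
move: hs he; rewrite /pp /hist.
case: (cfg n) => [[h L] k] /= hs he.
by rewrite last_rcons hs he.
Qed.


Lemma mv_edge h L k : edge A (last (vinit A) h) (mv h L k).
Proof.
rewrite /mv; case hv: (_ \in V0 A); first by apply: Hstrat; rewrite /owned_by hv.
by case: (pickE_spec (last (vinit A) h) (fun u => Attr L k u (ELs h + w (last (vinit A) h) u))).
Qed.

Lemma mv_attr h L k : Attr L k.+1 (last (vinit A) h) (ELs h) -> ~ Goal L (last (vinit A) h) (ELs h) ->
  Attr L k (mv h L k) (ELs h + w (last (vinit A) h) (mv h L k)).
Proof.
move=> /= [//|[_ hc]] _; move: hc; rewrite /mv.
case hv: (_ \in V0 A) => hc.
  by apply: hc; apply: Hstrat; rewrite /owned_by hv.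
have [_ h2] := pickE_spec (last (vinit A) h) (fun u => Attr L k u (ELs h + w (last (vinit A) h) u)).
exact: h2.
Qed.

Lemma pp_play : is_play pp.
Proof.
split; first by [].
move=> n; have [_ _ ->] := step_facts n; rewrite -last_hist; exact: mv_edge.
Qed.

Lemma pp_cons : consistent false sg pp.
Proof.
move=> n hv; have [_ _ ->] := step_facts n.
rewrite /mv last_hist; move: hv; rewrite /owned_by => ->.
by rewrite size_hist /= hist_pref prefixS -cats1 take_size_cat // size_prefix.
Qed.

Lemma pp_win : AvgEnergyL w t pp.
Proof. exact: Hwin pp_play pp_cons. Qed.

Lemma pp_nonneg n : 0 <= EL w pp n.
Proof. by case: pp_win => h _; apply: h. Qed.

Lemma newL_gt T e : e < newL T e.
Proof.
have h1 : (Qf T e <= 2 * Wb1 * Qf T e)%N by rewrite leq_pmull // muln_gt0.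
have h2 : (`|e| < Qf T e)%N by rewrite /Qf; lia.
rewrite /newL; have := lez_abs e; lia.
Qed.

Lemma V_pos : (0 < #|V|)%N.
Proof. by apply/card_gt0P; exists (vinit A). Qed.

Lemma invariant n : Attr (Lc n) (kc n) (pp n) (EL w pp n).
Proof.
elim: n => [|n IH]; first by rewrite /= EL0; right; split.
have [hL hk hp] := step_facts n.
have hstep : forall L k, Attr L k.+1 (pp n) (EL w pp n) -> ~ Goal L (pp n) (EL w pp n) ->
    Lc n.+1 = L -> kc n.+1 = k -> pp n.+1 = mv (hist n) L k ->
    Attr (Lc n.+1) (kc n.+1) (pp n.+1) (EL w pp n.+1).
  move=> L k ha hg hL' hk' hp'; rewrite ELS hL' hk' hp' -ELh -last_hist.
  by apply: mv_attr; rewrite ?ELh ?last_hist.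
move: hL hk hp; case: (pbP (Goal (Lc n) (pp n) (EL w pp n))) => hg hL hk hp.
  have hU : U (pp n) (EL w pp n).
    case: hg => [h|[_ //]]; by have := pp_nonneg n; rewrite leNgt h.
  have ha := attrU (newL n (EL w pp n)) hU.
  have hg1 : ~ Goal (newL n (EL w pp n)) (pp n) (EL w pp n).
    case=> [h|[h _]]; first by have := pp_nonneg n; rewrite leNgt h.
    by have := newL_gt n (EL w pp n); rewrite ltNge h.
  move: ha hk hp; case: (NL _) => [|k] ha hk hp; first by case: hg1.
  exact: hstep ha hg1 hL hk hp.
move: IH hk hp; case: (kc n) => [|k] IH hk hp; first by case: hg.
exact: hstep IH hg hL hk hp.
Qed.


Definition PS n := Goal (Lc n) (pp n) (EL w pp n).

Lemma kc0_PS n : kc n = 0%N -> PS n.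
Proof. by move=> h; have := invariant n; rewrite h. Qed.

Lemma PS0 : PS 0.
Proof. exact: kc0_PS. Qed.

Lemma stepG n : PS n -> Lc n.+1 = newL n (EL w pp n) /\ kc n.+1 = (NL (newL n (EL w pp n))).-1.
Proof.
by move=> hg; have [hL hk _] := step_facts n; move: hL hk; case: pbP.
Qed.

Lemma stepNG n : ~ PS n -> Lc n.+1 = Lc n /\ kc n.+1 = (kc n).-1.
Proof.
by move=> hg; have [hL hk _] := step_facts n; move: hL hk; case: pbP.
Qed.

Lemma NL_pos T e : (0 < NL (newL T e))%N.
Proof.
by rewrite /NL /newL muln_gt0 V_pos /= !muln_gt0 /Qf addn2.
Qed.

Lemma next_phase T : PS T -> exists T', [/\ (T < T')%N, (T' <= T + NL (newL T (EL w pp T)))%N,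
  PS T' & Lc T' = newL T (EL w pp T)].
Proof.
move=> hT; set L1 := newL T _; set K := NL L1.
have claim : forall j, (forall i, (0 < i <= j)%N -> ~ PS (T + i)) ->
    Lc (T + j).+1 = L1 /\ kc (T + j).+1 = (K.-1 - j)%N.
  elim=> [|j IH] hj.
    by rewrite addn0 subn0; apply: stepG.
  have [IH1 IH2] : Lc (T + j).+1 = L1 /\ kc (T + j).+1 = (K.-1 - j)%N.
    by apply: IH => i /andP [h1 h2]; apply: hj; rewrite h1 /= ltnW // ltnS.
  have hn : ~ PS (T + j.+1) by apply: hj; rewrite /= leqnn.
  rewrite addnS in hn *; have [-> ->] := stepNG hn.
  by rewrite IH1 IH2 subnS.
have hK := NL_pos T (EL w pp T).
case: (classic (exists i, (0 < i <= K)%N /\ PS (T + i))) => [hex|hno].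
  pose q i := [&& (0 < i)%N, (i <= K)%N & pb (PS (T + i))].
  have exq : exists i, q i by case: hex => i [/andP [h1 h2] h3]; exists i; rewrite /q h1 h2; apply/pbP.
  case: (ex_minnP exq) => i0 /and3P [h1 h2 /pbP h3] hmin.
  have hbefore : forall i, (0 < i <= i0.-1)%N -> ~ PS (T + i).
    move=> i /andP [hi1 hi2] hPS.
    have hiK : (i <= K)%N := leq_trans hi2 (leq_trans (leq_pred _) h2).
    have : q i by rewrite /q hi1 hiK; apply/pbP.
    move/hmin => hle.
    have : (i0 <= i0.-1)%N := leq_trans hle hi2.
    by rewrite -{1}(prednK h1) ltnn.
  have [hc _] := claim i0.-1 hbefore.
  rewrite -addnS prednK // in hc.
  exists (T + i0); split; [by rewrite -{1}(addn0 T) ltn_add2l | by rewrite leq_add2l | by [] | by []].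
exfalso.
have hb : forall i, (0 < i <= K.-1)%N -> ~ PS (T + i).
  move=> i /andP [h1 h2] hp; apply: hno; exists i; split => //.
  by rewrite h1 /= (leq_trans h2) // leq_pred.
have [_ hk] := claim K.-1 hb.
apply: hno; exists K; split; first by rewrite hK leqnn.
by apply: kc0_PS; move: hk; rewrite -addnS prednK // subnn.
Qed.


Lemma phases_inf N : exists T, (N <= T)%N /\ PS T.
Proof.
elim: N => [|N [T [hT hP]]]; first by exists 0%N; split => //; exact: PS0.
have [T' [h1 _ h3 _]] := next_phase hP.
by exists T'; split => //; apply: leq_ltn_trans h1.
Qed.

Lemma EL_step i : EL w pp i.+1 - Wb1%:Z <= EL w pp i.
Proof. rewrite ELS; have [h _] := w_le (pp i) (pp i.+1); rewrite /Wb1; lia. Qed.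

Lemma play_false : False.
Proof.
have [_ hAE] := pp_win.
case: (hAE 1 ltr01) => N hN.
have [T [hNT hP]] := phases_inf N.
have [T' [h1 h2 h3 h4]] := next_phase hP.
set e := EL w pp T in h2 h4.
have hL : newL T e <= EL w pp T'.
  case: h3 => [h|[h _]]; first by have := pp_nonneg T'; rewrite leNgt h.
  by rewrite -h4.
have hS := avg_big (f := EL w pp) (T' := T') (Q := Qf T e) (W := Wb1) (EL0 pp) pp_nonneg EL_step (isT : (0 < Wb1)%N) hL.
have hS' : ((t.+1 * T'.+1)%N%:Z) < \sum_(i < T'.+1) EL w pp i.
  apply: lt_le_trans hS; rewrite ltz_nat.
  move: h2; rewrite /NL /newL /= -/(Qf T e).
  have hQ : (t.+1 * (1 + 2 * #|V| * Wb1) + T + 2 <= Qf T e)%N by rewrite /Qf; lia.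
  move: hQ; move: (Qf T e) #|V| Wb1 => Q v W hQ hT'.
  have hc : (T'.+1 <= (1 + 2 * v * W) * Q)%N.
    rewrite mulnDl mul1n.
    have : (v * (2 * W * Q) = 2 * v * W * Q)%N by rewrite !mulnA (mulnC v 2).
    lia.
  have hd : (t.+1 * (1 + 2 * v * W) <= Q)%N by lia.
  apply: (leq_ltn_trans (leq_mul (leqnn t.+1) hc)); rewrite mulnA.
  apply: (leq_ltn_trans (leq_mul hd (leqnn Q))).
  rewrite ltn_mul2l ltnSn andbT; lia.
have hNT' : (N <= T'.+1)%N by apply: leq_trans hNT _; apply: ltnW; apply: ltnW.
have := hN T'.+1 hNT'.
rewrite /avgEL ler_pdivrMr ?ltr0n // natr1 -natrM.
rewrite -(ltr_int rat) in hS'.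
move=> h; have := lt_le_trans hS' h; rewrite ltxx //.
Qed.

End Play.

End Proof.

Theorem lemma2 (A : arena) (w : vert A -> vert A -> int) :
  (exists t : nat, wins0 (AvgEnergyL w t)) <->
  (exists cap : nat, wins0 (EnergyLU w cap)).
Proof.
split.
- case=> t [sg [hs hw]].
  case: (classic (exists C, Safe w C (vinit A) 0)) => [[C hC]|hn].
    by exists C; apply: safe_win hC.
  exfalso; apply: (play_false hs hw) => C hC; apply: hn; by exists C.
- case=> cap [sg [hs hw]]; exists cap, sg; split => // p hp hc.
  by apply: LU_avg; apply: hw.
Qed.
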